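(* For every integer $\nu\ge12$, $c_\nu\le\frac14+\frac{1}{3\sqrt\nu-10}$.
   Context: A weighted digraph $D=(V,A,w)$ is a digraph without loops or parallel arcs (opposite arcs allowed) with weights $w:A\to\mathbb{R}_{\ge0}$ (no lower bound on weights); $w(D)$ is the total arc weight. For a partition $(X,Y)$ of $V$, $w(X,Y)$ is the total weight of arcs from $X$ to $Y$, and $\mathrm{mac}(D)=\max_{(X,Y)}w(X,Y)$. For an integer $\nu\ge1$, $c_\nu$ is the supremum of reals $c\ge0$ such that every acyclic weighted digraph $D$ whose longest directed path has exactly $\nu$ vertices satisfies $\mathrm{mac}(D)\ge c\cdot w(D)$. *)

(* Defs.v *)
From HB Require Import structures.
From mathcomp Require Import all_boot all_order all_algebra.
From mathcomp Require Import boolp classical_sets reals.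
Set Implicit Arguments. Unset Strict Implicit. Unset Printing Implicit Defensive.
Import Order.TTheory GRing.Theory Num.Theory.
Local Open Scope ring_scope.

(* A weighted digraph: finite vertex type V, arc relation a (no loops; the
   relation form excludes parallel arcs but allows opposite arcs), and a weight
   function w, of which only the values on arcs matter. *)
Definition loopless (V : finType) (a : rel V) : Prop := forall x, ~~ a x x.

Definition nonneg_weights (R : realType) (V : finType) (a : rel V)
  (w : V -> V -> R) : Prop := forall u v, a u v -> 0 <= w u v.

Definition is_dpath (V : finType) (a : rel V) (s : seq V) : bool :=
  if s is x :: p then path a x p && uniq s else false.

Definition acyclic (V : finType) (a : rel V) : Prop :=
  forall s : seq V, s != [::] -> ~~ cycle a s.

Definition longest_path_vertices (V : finType) (a : rel V) (nu : nat) : Prop :=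
  (exists s, is_dpath a s /\ size s = nu) /\
  (forall s, is_dpath a s -> (size s <= nu)%N).

Definition total_weight (R : realType) (V : finType) (a : rel V)
  (w : V -> V -> R) : R := \sum_(u : V) \sum_(v : V | a u v) w u v.

Definition cut_weight (R : realType) (V : finType) (a : rel V)
  (w : V -> V -> R) (X : {set V}) : R :=
  \sum_(u in X) \sum_(v in ~: X | a u v) w u v.

Definition mac (R : realType) (V : finType) (a : rel V) (w : V -> V -> R) : R :=
  \big[Num.max/0]_(X : {set V}) cut_weight a w X.

Definition c_nu (R : realType) (nu : nat) : R :=
  sup [set c : R | 0 <= c /\
        forall (V : finType) (a : rel V) (w : V -> V -> R),
          loopless a -> nonneg_weights a w -> acyclic a ->
          longest_path_vertices a nu ->
          c * total_weight a w <= mac a w].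

(* Main.v *)
Require Import Defs.
From HB Require Import structures.
From mathcomp Require Import all_boot all_order all_algebra.
From mathcomp Require Import boolp classical_sets reals.
From mathcomp Require Import ring lra zify.
Import Order.TTheory GRing.Theory Num.Theory.
Local Open Scope ring_scope.

Definition ga (n m : nat) : rel 'I_n := fun u v => (u < v < u + m)%N.


Lemma ga_loopless n m : loopless (ga n m).
Proof. by move=> x; rewrite /ga ltnn. Qed.

Lemma ga_acyclic n m : acyclic (ga n m).
Proof.
move=> [//|x p] _; apply/negP => /= cyc.
have cyc' : path (fun u v : 'I_n => (u < v)%N) x (rcons p x).
  by apply: sub_path cyc => u v /andP[].
have tr : transitive (fun u v : 'I_n => (u < v)%N) by move=> a b c; apply: ltn_trans.
have := order_path_min tr cyc'.
move=> /allP /(_ x); rewrite mem_rcons mem_head ltnn => /(_ isT).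
done.
Qed.

Lemma ga_path n m (s : seq 'I_n) x : (1 < m)%N ->
  map val (x :: s) = iota (val x) (size s).+1 -> path (ga n m) x s.
Proof.
move=> m1; elim: s x => [|y s IH] x /=; first by []. move=> [Hy Hs].
apply/andP; split; first by rewrite /ga Hy; lia.
by apply: IH; rewrite /= Hy Hs.
Qed.

Lemma ga_longest n m : (0 < n)%N -> (1 < m)%N -> longest_path_vertices (ga n m) n.
Proof.
move=> n0 m1; split.
  exists (enum 'I_n); split; last exact: size_enum_ord.
  have E := val_enum_ord n.
  case Hs: (enum 'I_n) E => [|x p].
    by move=> /(congr1 size); rewrite size_iota /= => h; rewrite -h in n0.
  move=> E; rewrite /is_dpath -Hs enum_uniq andbT; apply: ga_path => //.
  have sz : (size p).+1 = n by have := size_enum_ord n; rewrite Hs.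
  have I0 : iota 0 n = 0%N :: iota 1 (size p).
    by move: sz; move: (size p) => k <-.
  have x0 : val x = 0%N by move: E; rewrite I0 /= => -[].
  by rewrite E I0 x0.
move=> [//|x p] /andP[_ u].
have := @uniq_leq_size _ (x :: p) (enum 'I_n) u; rewrite size_enum_ord.
by apply => y _; rewrite mem_enum.
Qed.

Lemma f_ge0 (R : realFieldType) (s q : R) : 12 <= s ^+ 2 -> 0 <= s -> q <= s -> s < q + 1 ->
  0 <= (3 * s - 6) * (2 * q - 1) * (3 * s ^+ 2 - (2 * q - 1) - 2) - 3 * (3 * s - 10) * s ^+ 2 * (2 * q).
Proof.
move=> h12 s0 qs sq.
have s3 : 3 <= s by nra.
set t := s - q.
have -> : q = s - t by rewrite /t; ring.
have t0 : 0 <= t by rewrite /t; lra.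
have t1 : t <= 1 by rewrite /t; lra.
have h1 : 0 <= s * (1 - t) by apply: mulr_ge0; lra.
have h2 : 0 <= s * (1 - t ^+ 2) by apply: mulr_ge0; nra.
have h3 : 0 <= s ^+ 2 * (s - 3) by apply: mulr_ge0; nra.
nra.
Qed.

Section Aux.
Variable R : realType.

Lemma shift_sum (f : nat -> R) n i :
  (forall v, f (v + n)%N = f v) ->
  \sum_(0 <= u < n) f (u + i)%N = \sum_(0 <= u < n) f u.
Proof.
move=> per; elim: i => [|i IH]; first by apply: eq_bigr => u _; rewrite addn0.
rewrite -IH.
set g := fun u => f (u + i)%N.
have H1 : \sum_(0 <= u < n.+1) g u = g 0%N + \sum_(0 <= u < n) g u.+1 by rewrite big_nat_recl.
have H2 : \sum_(0 <= u < n.+1) g u = \sum_(0 <= u < n) g u + g n by rewrite big_nat_recr.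
have gn : g n = g 0%N by rewrite /g add0n addnC per.
have : g 0%N + \sum_(0 <= u < n) g u.+1 = \sum_(0 <= u < n) g u + g 0%N.
  by rewrite -H1 H2 gn.
rewrite addrC => /addIr <-.
by apply: eq_bigr => u _; rewrite /g addSnnS.
Qed.

Lemma pair_sum (h : nat -> R) m :
  \sum_(0 <= j < m) \sum_(0 <= i < j) h (j - i)%N =
  \sum_(0 <= e < m) (m - e.+1)%:R * h e.+1.
Proof.
elim: m => [|m IH]; first by rewrite !big_geq.
rewrite big_nat_recr //= IH [in RHS]big_nat_recr //= subnn mul0r addr0.
have -> : \sum_(0 <= i < m) h (m - i)%N = \sum_(0 <= e < m) h e.+1.
  rewrite big_nat_rev /=; apply: eq_big_nat => i /andP[_ lim].
  by rewrite add0n subKn.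
rewrite -big_split /=; apply: eq_big_nat => e /andP[_ lem].
by rewrite subSn // mulrSr mulrDl mul1r.
Qed.

Lemma sum_pred1 (F : nat -> R) n c :
  \sum_(0 <= v < n) (if v == c then F v else 0) = if (c < n)%N then F c else 0.
Proof.
elim: n => [|n IH]; first by rewrite big_geq.
rewrite big_nat_recr //= IH.
case: (ltngtP c n) => [cn|nc|->].
- by rewrite ltnS (ltnW cn) addr0.
- by rewrite ltnS leqNgt nc addr0.
- by rewrite ltnSn add0r.
Qed.

Lemma tent_reindex (F : nat -> R) n k u :
  \sum_(0 <= v < n) (if (u < v < u + k.+1)%N then F v else 0) =
  \sum_(0 <= e < k) (if (u + e.+1 < n)%N then F (u + e.+1)%N else 0).
Proof.
elim: k => [|k IH].
  rewrite [RHS]big_geq // big_nat_cond big1 // => v _; case: ifP => //; lia.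
rewrite big_nat_recr //= -IH.
have -> : \sum_(0 <= v < n) (if (u < v < u + k.+2)%N then F v else 0) =
   \sum_(0 <= v < n) ((if (u < v < u + k.+1)%N then F v else 0) +
                      (if v == (u + k.+1)%N then F v else 0)).
  apply: eq_bigr => v _.
  case: (v =P (u + k.+1)%N) => [->|ne].
    rewrite ifT; last lia. rewrite ifF; last lia. by rewrite add0r.
  rewrite addr0; congr (if _ then _ else _); apply/idP/idP; lia.
by rewrite big_split /= sum_pred1.
Qed.
Lemma window (b : nat -> bool) m :
  2 * \sum_(0 <= j < m) \sum_(0 <= i < j) ((b i)%:R * (1 - (b j)%:R) : R) =
  (\sum_(0 <= i < m) (b i)%:R) * (m%:R - \sum_(0 <= i < m) (b i)%:R) +
  \sum_(0 <= i < m) (b i)%:R * (m%:R - 1 - 2 * i%:R).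
Proof.
elim: m => [|m IH]; first by rewrite !big_geq // mulr0 mul0r addr0.
rewrite !big_nat_recr //= mulrDr IH -mulr_suml.
have -> : \sum_(0 <= i < m) (b i)%:R * (m.+1%:R - 1 - 2 * i%:R) =
   \sum_(0 <= i < m) (b i)%:R * (m%:R - 1 - 2 * i%:R) + \sum_(0 <= i < m) (b i)%:R :> R.
  by rewrite -big_split /=; apply: eq_bigr => i _; rewrite mulrS; ring.
set A := \sum_(0 <= i < m) _.
set S := \sum_(0 <= i < m) _.
rewrite mulrS; case: (b m) => /=; ring.
Qed.

Lemma sum_lin m : \sum_(0 <= i < m) (m%:R - 1 - 2 * i%:R : R) = 0.
Proof.
elim: m => [|m IH]; first by rewrite big_geq.
rewrite big_nat_recr //=.
have -> : \sum_(0 <= i < m) (m.+1%:R - 1 - 2 * i%:R : R) =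
   \sum_(0 <= i < m) (m%:R - 1 - 2 * i%:R) + \sum_(0 <= i < m) 1.
  by rewrite -big_split /=; apply: eq_bigr => i _; rewrite mulrS; ring.
rewrite IH add0r sumr_const_nat subn0 -mulr_natl mulr1 mulrS; ring.
Qed.
Lemma cyc_bound (b : nat -> bool) n m : (forall v, b (v + n)%N = b v) ->
  \sum_(0 <= u < n) \sum_(0 <= e < m)
     (m - e.+1)%:R * ((b u)%:R * (1 - (b (u + e.+1)%N)%:R)) <=
  n%:R * m%:R ^+ 2 / 8 :> R.
Proof.
move=> per.
have E1 : forall u, \sum_(0 <= e < m)
     (m - e.+1)%:R * ((b u)%:R * (1 - (b (u + e.+1)%N)%:R)) =
   \sum_(0 <= j < m) \sum_(0 <= i < j)
     ((b u)%:R * (1 - (b (u + (j - i))%N)%:R) : R).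
  by move=> u; rewrite (pair_sum (fun d => (b u)%:R * (1 - (b (u + d)%N)%:R))).
rewrite (eq_bigr _ (fun u _ => E1 u)) exchange_big /=.
have E2 : forall j, \sum_(0 <= u < n) \sum_(0 <= i < j)
     ((b u)%:R * (1 - (b (u + (j - i))%N)%:R) : R) =
   \sum_(0 <= i < j) \sum_(0 <= u < n) ((b (u + i)%N)%:R * (1 - (b (u + j)%N)%:R)).
  move=> j; rewrite exchange_big /=; apply: eq_big_nat => i /andP[_ ij].
  have H := shift_sum (fun u => (b u)%:R * (1 - (b (u + (j - i))%N)%:R)) n i.
  rewrite /= in H; rewrite -H; last first.
    by move=> v; rewrite /= per -addnA [(n + _)%N]addnC addnA per.
  by apply: eq_bigr => u _; rewrite -addnA subnKC // ltnW.
rewrite (eq_bigr _ (fun j _ => E2 j)).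
have E3 : \sum_(0 <= j < m) \sum_(0 <= i < j) \sum_(0 <= u < n)
     ((b (u + i)%N)%:R * (1 - (b (u + j)%N)%:R) : R) =
   \sum_(0 <= u < n) \sum_(0 <= j < m) \sum_(0 <= i < j)
     ((b (u + i)%N)%:R * (1 - (b (u + j)%N)%:R) : R).
  symmetry; rewrite exchange_big /=; apply: eq_bigr => j _.
  by rewrite exchange_big.
rewrite E3.
have W : forall u, 2 * \sum_(0 <= j < m) \sum_(0 <= i < j)
     ((b (u + i)%N)%:R * (1 - (b (u + j)%N)%:R) : R) =
   (\sum_(0 <= i < m) (b (u + i)%N)%:R) * (m%:R - \sum_(0 <= i < m) (b (u + i)%N)%:R) +
   \sum_(0 <= i < m) (b (u + i)%N)%:R * (m%:R - 1 - 2 * i%:R).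
  by move=> u; rewrite (window (fun i => b (u + i)%N)).
have Z : \sum_(0 <= u < n) \sum_(0 <= i < m) (b (u + i)%N)%:R * (m%:R - 1 - 2 * i%:R) = 0 :> R.
  rewrite exchange_big /=.
  under eq_bigr => i _ do rewrite -mulr_suml.
  under eq_bigr => i _ do rewrite (shift_sum (fun u => (b u)%:R) n i (fun v => congr1 (fun t : bool => t%:R) (per v))).
  by rewrite -mulr_sumr sum_lin mulr0.
have B : forall u, (\sum_(0 <= i < m) (b (u + i)%N)%:R) *
    (m%:R - \sum_(0 <= i < m) (b (u + i)%N)%:R) <= m%:R ^+ 2 / 4 :> R.
  move=> u; set A := \sum_(0 <= i < m) _.
  have := sqr_ge0 (m%:R / 2 - A); lra.
suff : 2 * \sum_(0 <= u < n) \sum_(0 <= j < m) \sum_(0 <= i < j)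
     ((b (u + i)%N)%:R * (1 - (b (u + j)%N)%:R) : R) <= n%:R * m%:R ^+ 2 / 4 by lra.
rewrite mulr_sumr (eq_bigr _ (fun u _ => W u)) big_split /= Z addr0.
apply: le_trans (ler_sum _ (fun u _ => B u)) _.
by rewrite sumr_const_nat subn0 -mulr_natl; nra.
Qed.
Lemma tent_le_cyc (b : nat -> bool) n k u :
  \sum_(0 <= v < n) (if (u < v < u + k.+1)%N then
       (k.+1 - (v - u))%:R * (1 - (b v)%:R) else 0) <=
  \sum_(0 <= e < k.+1) (k.+1 - e.+1)%:R * (1 - (b (u + e.+1)%N)%:R) :> R.
Proof.
rewrite tent_reindex big_nat_recr //= subnn mul0r addr0.
apply: ler_sum => e _; rewrite addKn.
case: ifP => // _; apply: mulr_ge0; first exact: ler0n.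
by case: (b _); rewrite /= ?subrr ?subr0.
Qed.

Definition gw (n m : nat) : 'I_n -> 'I_n -> R := fun u v => (m - (v - u))%:R.

Lemma cut_bound n k (X : {set 'I_n}) :
  cut_weight (ga n k.+1) (gw n k.+1) X <= n%:R * k.+1%:R ^+ 2 / 8.
Proof.
pose b v := [exists u in X, val u == (v %% n)%N].
have bper : forall v, b (v + n)%N = b v by move=> v; rewrite /b modnDr.
have bval : forall u : 'I_n, b u = (u \in X).
  move=> u; rewrite /b; apply/existsP/idP => [[u' /andP[u'X /eqP]]|uX].
    by rewrite modn_small // => /val_inj <-.
  by exists u; rewrite uX modn_small //= eqxx.
apply: le_trans (cyc_bound b n k.+1 bper).
rewrite /cut_weight big_mkcond /=.
have -> : \sum_(i < n) (if i \in X then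
      \sum_(v in ~: X | ga n k.+1 i v) gw n k.+1 i v else 0) =
   \sum_(i < n) (b i)%:R * \sum_(v < n) (if (i < v < i + k.+1)%N then
       (k.+1 - (v - i))%:R * (1 - (b v)%:R) else 0).
  apply: eq_bigr => i _; rewrite bval.
  case: (i \in X); rewrite ?mul0r // mul1r big_mkcond /=.
  apply: eq_bigr => v _; rewrite bval inE /ga /gw.
  by case: (v \in X) => /=; case: (i < v < i + k.+1)%N => /=; rewrite ?subrr ?subr0 ?mulr0 ?mulr1.
rewrite -(@big_mkord _ 0 +%R n (fun _ => true) (fun i => (b i)%:R * \sum_(v < n) (if (i < v < i + k.+1)%N then
       (k.+1 - (v - i))%:R * (1 - (b v)%:R) else 0))) /=.
apply: ler_sum => u _.
rewrite -(@big_mkord _ 0 +%R n (fun _ => true) (fun v => (if (u < v < u + k.+1)%N then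
       (k.+1 - (v - u))%:R * (1 - (b v)%:R) else 0))).
have -> : \sum_(0 <= e < k.+1) (k.+1 - e.+1)%:R * ((b u)%:R * (1 - (b (u + e.+1)%N)%:R)) =
   (b u)%:R * \sum_(0 <= e < k.+1) (k.+1 - e.+1)%:R * (1 - (b (u + e.+1)%N)%:R) :> R.
  by rewrite mulr_sumr; apply: eq_bigr => e _; ring.
by apply: ler_wpM2l; [exact: ler0n | exact: tent_le_cyc].
Qed.
Lemma count_lt n c : (c <= n)%N ->
  \sum_(0 <= u < n) (if (u + c < n)%N then 1 else 0) = (n - c)%:R :> R.
Proof.
move=> cn; rewrite (@big_cat_nat _ _ _ (n - c)) ?leq_subr //=.
rewrite [X in _ + X]big_nat_cond [X in _ + X]big1; last first.
  by move=> u /andP[/andP[h1 h2] _]; rewrite ifF //; apply/negbTE; lia.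
rewrite addr0 (eq_big_nat _ _ (F2 := fun _ => 1)); last first.
  by move=> u /andP[_ h]; rewrite ifT //; lia.
by rewrite sumr_const_nat subn0.
Qed.

Lemma total_eq n k : (k < n)%N ->
  total_weight (ga n k.+1) (gw n k.+1) =
  \sum_(0 <= e < k) (k - e)%:R * (n - e.+1)%:R.
Proof.
move=> kn; rewrite /total_weight.
have -> : \sum_(u : 'I_n) \sum_(v | ga n k.+1 u v) gw n k.+1 u v =
  \sum_(u < n) \sum_(v < n) (if (u < v < u + k.+1)%N then (k.+1 - (v - u))%:R else 0 : R).
  by apply: eq_bigr => u _; rewrite big_mkcond.
rewrite -(@big_mkord _ 0 +%R n (fun _ => true) (fun u => \sum_(v < n)
   (if (u < v < u + k.+1)%N then (k.+1 - (v - u))%:R else 0 : R))) /=.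
under eq_bigr => u _ do rewrite -(@big_mkord _ 0 +%R n (fun _ => true)
   (fun v => (if (u < v < u + k.+1)%N then (k.+1 - (v - u))%:R else 0 : R))) tent_reindex.
rewrite exchange_big /=; apply: eq_big_nat => e /andP[_ ek].
rewrite -(count_lt n e.+1 (leq_trans ek (ltnW kn))) mulr_sumr.
apply: eq_bigr => u _; rewrite addKn subSS.
by case: ifP; rewrite ?mulr1 ?mulr0.
Qed.

Lemma sumG (x : R) k :
  \sum_(0 <= e < k) (x - e%:R - 1) = k%:R * x - k%:R * (k%:R + 1) / 2.
Proof.
elim: k => [|k IH]; first by rewrite big_geq // mul0r; ring.
rewrite big_nat_recr //= IH mulrS; by field.
Qed.

Lemma sumT (x : R) k :
  \sum_(0 <= e < k) (k%:R - e%:R) * (x - e%:R - 1) =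
  x * k%:R * (k%:R + 1) / 2 - k%:R * (k%:R + 1) * (k%:R + 2) / 6.
Proof.
elim: k => [|k IH]; first by rewrite big_geq // mulr0 mul0r; ring.
rewrite big_nat_recr //=.
have -> : \sum_(0 <= e < k) (k.+1%:R - e%:R) * (x - e%:R - 1) =
  \sum_(0 <= e < k) (k%:R - e%:R) * (x - e%:R - 1) + \sum_(0 <= e < k) (x - e%:R - 1).
  by rewrite -big_split /=; apply: eq_bigr => e _; rewrite mulrS; ring.
rewrite IH sumG mulrS; by field.
Qed.

Lemma total_closed n k : (k < n)%N ->
  total_weight (ga n k.+1) (gw n k.+1) =
  n%:R * k%:R * (k%:R + 1) / 2 - k%:R * (k%:R + 1) * (k%:R + 2) / 6.
Proof.
move=> kn; rewrite total_eq // -sumT; apply: eq_big_nat => e /andP[_ ek].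
rewrite natrB ?(ltnW ek) // natrB; last by lia.
by rewrite mulrS; ring.
Qed.
End Aux.

Lemma mac_ge0 (R : realType) (V : finType) (a : rel V) (w : V -> V -> R) :
  0 <= mac a w.
Proof.
rewrite /mac; elim: (index_enum _) => [|i r IH]; first by rewrite big_nil.
by rewrite big_cons le_max IH orbT.
Qed.

Theorem mainTheorem13 (R : realType) (nu : nat) :
  (12 <= nu)%N ->
  c_nu R nu <= 1 / 4 + 1 / (3 * Num.sqrt (nu%:R) - 10).
Proof.
move=> h12.
have [q [hq1 hq2]] : exists q, (q * q <= nu)%N /\ (nu < q.+1 * q.+1)%N.
  elim: (nu) => [|n [q [h1 h2]]]; first by exists 0%N.
  case: (ltnP n.+1 (q.+1 * q.+1)) => h; first by exists q; split => //; lia.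
  by exists q.+1; split; nia.
have q3 : (3 <= q)%N by nia.
pose k := (2 * q - 1)%N.
have kn : (k < nu)%N by rewrite /k; nia.
apply: ge_sup.
  exists 0; split => // V a w _ _ _ _; rewrite mul0r; exact: mac_ge0.
move=> c [c0 Hc].
have H := Hc _ (ga nu k.+1) (gw R nu k.+1) (ga_loopless _ _)
   (fun u v _ => ler0n _ _) (ga_acyclic _ _) (ga_longest nu k.+1 ltac:(lia) ltac:(lia)).
have Hm : mac (ga nu k.+1) (gw R nu k.+1) <= nu%:R * k.+1%:R ^+ 2 / 8.
  apply: bigmax_le => [|X _]; last exact: cut_bound.
  have h0 : (0:R) <= nu%:R * k.+1%:R ^+ 2 / 8 by rewrite divr_ge0 // mulr_ge0 // exprn_ge0.
  exact: h0.
rewrite total_closed // in H.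
have {Hm} H := le_trans H Hm.
set s := Num.sqrt (nu%:R : R).
have s0 : 0 <= s by apply: sqrtr_ge0.
have hs : s ^+ 2 = nu%:R by rewrite sqr_sqrtr // ler0n.
have K : (k%:R : R) = 2 * q%:R - 1 by rewrite /k natrB ?natrM //; lia.
have hq1' : (q%:R : R) ^+ 2 <= s ^+ 2 by rewrite hs -natrX ler_nat expnS expn1.
have hq2' : s ^+ 2 < (q%:R + 1 : R) ^+ 2 by rewrite hs natr1 -natrX ltr_nat expnS expn1.
have h12' : 12 <= s ^+ 2 by rewrite hs (ler_nat R 12 nu).
have qs : q%:R <= s by nra.
have sq : s < q%:R + 1 by nra.
have f := @f_ge0 R _ _ h12' s0 qs sq.
have s3 : 10 / 3 < s by nra.
have D0 : 3 * s - 10 != 0 by apply/eqP; lra.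
have Ks : (k.+1%:R : R) = 2 * q%:R.
  by rewrite (_ : k.+1 = 2 * q)%N ?natrM //; rewrite /k; lia.
move: H; rewrite -hs Ks K.
set T := _ - _.
have q1 : 3 <= (q%:R : R) by rewrite (ler_nat R 3 q).
have Tpos : 0 < T.
  rewrite /T; have : 0 < (2 * q%:R - 1) * (2 * q%:R) * (3 * s ^+ 2 - 2 * q%:R - 1) :> R.
    apply: mulr_gt0; [apply: mulr_gt0|]; nra.
  move=> h; nra.
move=> H.
rewrite -(ler_pM2r Tpos); apply: le_trans H _.
set D := 3 * s - 10.
have E : (1 / 4 + 1 / D) * T - s ^+ 2 * (2 * q%:R) ^+ 2 / 8 =
  (1 / D) * (2 * q%:R) / 24 * ((3 * s - 6) * (2 * q%:R - 1) *
    (3 * s ^+ 2 - (2 * q%:R - 1) - 2) - 3 * (3 * s - 10) * s ^+ 2 * (2 * q%:R)).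
  by rewrite /T /D; field.
have : 0 <= (1 / D) * (2 * q%:R) / 24 * ((3 * s - 6) * (2 * q%:R - 1) *
    (3 * s ^+ 2 - (2 * q%:R - 1) - 2) - 3 * (3 * s - 10) * s ^+ 2 * (2 * q%:R)).
  have fD : 0 <= 1 / D by rewrite /D divr_ge0 //; lra.
  apply: mulr_ge0; last exact: f.
  by apply: divr_ge0 => //; apply: mulr_ge0 => //; lra.
rewrite -E; lra.
Qed.
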